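(* Let $0<H<1$, $H\neq 1/2$, $\lambda>0$, $\tau>0$, $h>0$, $l>0$, $L>0$, $L'>0$, and let $K_\nu(s)=\frac12\int_0^\infty z^{\nu-1}\exp[-\frac{s}{2}(z+\frac1z)]\,dz$ for $s>0$. Let $(t_k)_{k\ge1}$ be positive times and, for each $k\ge0$, let $r_k$ be either $$r_k=\frac{\Gamma(H+1/2)}{2H\sqrt{\pi}(2\lambda)^H}\,\lambda\, t_{k+1}^{1-H}K_{H-1}(\lambda t_{k+1})\,\tau \quad\text{or}\quad r_k=\frac{\Gamma(H+1/2)}{H\sqrt{\pi}(2\lambda)^H}\,\lambda\, t_{k+1}K_{H-1}(\lambda t_{k+1})\,\tau$$ (the first choice being used for all $k$ when $0<H<1/2$; when $1/2<H<1$ the first choice is used for $k\le k_1$ and the second for $k> k_1$, for some index $k_1$). Let $u^0,u^1,u^2,\dots$ be functions in $L^2$ of the periodic domain $[0,L)\times[0,L')$ (i.e. $L$-periodic in $x$ and $L'$-periodic in $y$) satisfying, for all $k\ge0$ and all $(x,y)$, the implicit difference relation $$\Big(1+\frac{2r_k}{h^2}+\frac{2r_k}{l^2}\Big)u^{k+1}(x,y)-\frac{r_k}{h^2}\big(u^{k+1}(x+h,y)+u^{k+1}(x-h,y)\big)-\frac{r_k}{l^2}\big(u^{k+1}(x,y+l)+u^{k+1}(x,y-l)\big)=u^k(x,y).$$ Then the scheme is unconditionally stable: for every $k\ge0$ (and every $\tau,h,l>0$), $$\|u^k\|_{L^2}^2\le\|u^0\|_{L^2}^2 .$$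
   Context: This is the finite-difference scheme for the equation $\partial_t u=\frac{\Gamma(H+1/2)}{\sqrt{\pi}(2\lambda)^H}\lambda t^H K_{H-1}(\lambda t)(\partial_x^2+\partial_y^2)u$ (Fokker–Planck equation of tempered fractional Brownian motion), discretized implicitly in the variable $t^{2H}$ (nonuniform mesh $t_k=(\tau k)^{1/(2H)}$, so that $t_{k+1}^{2H}-t_k^{2H}=\tau$) and, in the case $1/2<H<1$ after the index $k_1$, in the variable $t^{H}$ (with step $\tau$ in $t^H$). Stability is in the sense of the Fourier (von Neumann) method: $\|\cdot\|_{L^2}$ is the $L^2$ norm over $[0,L)\times[0,L')$. Note $K_{H-1}(s)>0$ for $s>0$, so $r_k>0$. *)

(* Defs.v *)
From HB Require Import structures.
From mathcomp Require Import all_boot all_order all_algebra.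
From mathcomp Require Import all_classical all_reals all_analysis.
Set Implicit Arguments. Unset Strict Implicit. Unset Printing Implicit Defensive.
Import Order.TTheory GRing.Theory Num.Theory.
Import numFieldNormedType.Exports.
Local Open Scope classical_set_scope.
Local Open Scope ring_scope.

Definition Gammaf (R : realType) (a : R) : R :=
  Rintegral lebesgue_measure `]0%R, +oo[%classic
    (fun z : R => z `^ (a - 1) * expR (- z)).

Definition besselK (R : realType) (nu s : R) : R :=
  2^-1 * Rintegral lebesgue_measure `]0%R, +oo[%classic
    (fun z : R => z `^ (nu - 1) * expR (- (s / 2) * (z + z^-1))).

Definition r_first (R : realType) (H lam tau tk1 : R) : R :=
  Gammaf (H + 2^-1) / (2 * H * Num.sqrt pi * (2 * lam) `^ H)
  * lam * tk1 `^ (1 - H) * besselK (H - 1) (lam * tk1) * tau.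

Definition r_second (R : realType) (H lam tau tk1 : R) : R :=
  Gammaf (H + 2^-1) / (H * Num.sqrt pi * (2 * lam) `^ H)
  * lam * tk1 * besselK (H - 1) (lam * tk1) * tau.

Definition leb2 (R : realType) :=
  ((@lebesgue_measure R) \x (@lebesgue_measure R))%E.

Definition cell (R : realType) (L L' : R) : set (R * R) :=
  `[0%R, L[%classic `*` `[0%R, L'[%classic.

Definition L2norm2 (R : realType) (L L' : R) (f : R * R -> R) : \bar R :=
  (\int[@leb2 R]_(z in cell L L') ((f z) ^+ 2)%:E)%E.

(* Main.v *)
Require Import Defs.
From HB Require Import structures.
From mathcomp Require Import all_boot all_order all_algebra.
From mathcomp Require Import all_classical all_reals all_analysis.
Import Order.TTheory GRing.Theory Num.Theory.
Import numFieldNormedType.Exports.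
Local Open Scope classical_set_scope.
Local Open Scope ring_scope.

From mathcomp Require Import measurable_realfun.
From mathcomp Require Import ring lra.
Set Implicit Arguments. Unset Strict Implicit. Unset Printing Implicit Defensive.

Section shiftm.
Context (R : realType) (c : R).
Local Open Scope ereal_scope.

Local Notation T := (measurableTypeR R).
Lemma mshift : measurable_fun [set: T] (fun x : T => (x + c)%R : T).
Proof. by apply: measurable_funD => //; exact: measurable_cst. Qed.

Definition shiftm : set T -> \bar R :=
  fun A => (@lebesgue_measure R) ((fun x : T => (x + c)%R : T) @^-1` A).

Let shiftm0 : shiftm set0 = 0.
Proof. by rewrite /shiftm preimage_set0 measure0. Qed.

Let shiftm_ge0 (A : set T) : 0 <= shiftm A.
Proof. exact: measure_ge0. Qed.

Let shiftm_sigma_additive : semi_sigma_additive shiftm.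
Proof.
move=> F mF tF mUF; rewrite /shiftm preimage_bigcup.
apply: measure_semi_sigma_additive.
- by move=> n; rewrite -[X in measurable X]setTI; exact: mshift.
- apply/trivIsetP => /= i j _ _ ij; rewrite -preimage_setI.
  by move/trivIsetP : tF => /(_ _ _ _ _ ij) ->//; rewrite preimage_set0.
- by rewrite -preimage_bigcup -[X in measurable X]setTI; exact: mshift.
Qed.

HB.instance Definition _ := isMeasure.Build _ _ _
  shiftm shiftm0 shiftm_ge0 shiftm_sigma_additive.

Lemma shiftmE (A : set T) : measurable A -> (@lebesgue_measure R) A = shiftm A.
Proof.
move=> mA; have := (@lebesgue_measure_unique R [the measure _ _ of shiftm]).
move=> /(_ _ A mA); apply => _ [[a b] _ <-].
rewrite /= /shiftm.
have -> : (fun x : T => (x + c)%R : T) @^-1` `]a, b]%classic = `](a - c)%R, (b - c)%R]%classic.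
  apply/seteqP; split => x /=; rewrite !in_itv /= ltrBlDr lerBrDr //.
rewrite !lebesgue_measure_itv /= !lte_fin ltrD2r.
by case: ifP => // _; rewrite -!EFinD; congr EFin; ring.
Qed.

End shiftm.

Section shift_integral.
Context (R : realType).
Local Open Scope ereal_scope.

Lemma integral_shift (c : R) (D : set R) (f : R -> \bar R) :
  measurable D -> measurable_fun D f -> (forall x, D x -> 0 <= f x) ->
  \int[(@lebesgue_measure R)]_(x in (fun x : R => (x + c)%R) @^-1` D) f (x + c)%R
  = \int[(@lebesgue_measure R)]_(x in D) f x.
Proof.
move=> mD mf f0.
have := @ge0_integral_pushforward _ _ _ _ R _ (mshift c) (@lebesgue_measure R) D f mD mf.
move=> <-; last by move=> x /[!inE]; exact: f0.
apply: eq_measure_integral => [|mh A mA _]; first exact: mshift.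
rewrite /= /pushforward (shiftmE c mA) /shiftm //.
Qed.

End shift_integral.

Section periodic.
Context (R : realType).

Lemma periodic_int (T : Type) (L : R) (g : R -> T) :
  (forall x, g (x + L) = g x) -> forall (z : int) x, g (x + z%:~R * L) = g x.
Proof.
move=> gL z x; case: z => n.
  elim: n x => [|n IH] x; first by rewrite mul0r addr0.
  rewrite -[(Posz n.+1)%:~R]/(n.+1%:R : R) -addn1 natrD mulrDl mul1r addrA gL.
  exact: IH.
elim: n x => [|n IH] x.
  rewrite NegzE mulrNz -[(Posz 1)%:~R]/(1%:R : R) mulNr mul1r.
  by rewrite -(gL (x + - L)) addrNK.
rewrite NegzE mulrNz -[(Posz n.+2)%:~R]/(n.+2%:R : R) -addn1 natrD.
rewrite mulNr mulrDl mul1r opprD addrA -(gL (x + _ - L)) addrNK.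
by have := IH x; rewrite NegzE mulrNz -[(Posz n.+1)%:~R]/(n.+1%:R : R) mulNr.
Qed.

Lemma preimage_shift_co (c a b : R) :
  (fun x : R => (x + c)%R) @^-1` `[a, b[%classic = `[(a - c)%R, (b - c)%R[%classic.
Proof. by apply/seteqP; split => x /=; rewrite !in_itv /= lerBlDr ltrBrDr. Qed.

Lemma disj_co (a b d : R) : [disjoint `[a, b[%classic & `[b, d[%classic].
Proof.
apply/disj_setPS => x [] /=; rewrite !in_itv /= => /andP[_ h1] /andP[h2 _].
by move: (lt_le_trans h1 h2); rewrite ltxx.
Qed.

Lemma setU_co (a b d : R) : a <= b -> b <= d ->
  `[a, d[%classic = `[a, b[%classic `|` `[b, d[%classic.
Proof. by move=> ab bd; apply: itv_bndbnd_setU; rewrite bnd_simp. Qed.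

End periodic.

Section periodic_integral.
Context (R : realType).
Local Open Scope ereal_scope.
Local Notation mu := (@lebesgue_measure R).
Variables (L : R) (f : R -> \bar R).
Hypotheses (L0 : (0 < L)%R) (mf : measurable_fun setT f) (f0 : forall x, 0 <= f x)
  (fL : forall x, f (x + L)%R = f x).

Let J (a : R) := \int[mu]_(x in `[a, (a + L)%R[) f x.

Let shift_J (a c : R) : \int[mu]_(x in `[(a - c)%R, (a + L - c)%R[) f (x + c)%R = J a.
Proof.
rewrite -preimage_shift_co integral_shift //; exact: measurable_funS mf.
Qed.

Let JL a : J (a + L)%R = J a.
Proof.
rewrite -(shift_J _ L) addrK.
have -> : (a + L + L - L = a + L)%R by rewrite addrK.
by apply: eq_integral => x _; rewrite fL.
Qed.

Let J0 a : (0 <= a <= L)%R -> J a = J 0%R.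
Proof.
move=> /andP[a0 aL].
rewrite /J add0r (@setU_co _ a L (a + L)%R) ?lerDr ?lerD2r //.
rewrite (@setU_co _ 0%R a L) //.
rewrite !ge0_integral_setU //; last 4 first.
- exact: measurable_funS mf.
- exact: disj_co.
- exact: measurable_funS mf.
- exact: disj_co.
rewrite [RHS]addeC; congr (_ + _).
rewrite -(@integral_shift _ L) //; last exact: measurable_funS mf.
rewrite preimage_shift_co subrr addrK.
by apply: eq_integral => x _; rewrite fL.
Qed.

Lemma periodic_shift_integral (c : R) :
  \int[mu]_(x in `[0%R, L[) f (x + c)%R = \int[mu]_(x in `[0%R, L[) f x.
Proof.
have -> : \int[mu]_(x in `[0%R, L[) f x = J 0%R by rewrite /J add0r.
have := shift_J c c; rewrite addrAC subrr add0r => ->.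
pose z := Num.floor (c / L).
have -> : c = ((c - z%:~R * L) + z%:~R * L)%R by rewrite subrK.
rewrite (@periodic_int _ _ L J JL).
apply: J0.
have h1 : ((z%:~R : R) <= c / L)%R by exact: floor_le_tmp.
have h2 : (c / L < z%:~R + 1)%R by have := floorD1_gt (c / L); rewrite intrD.
have cE : (c = (c / L) * L)%R by rewrite divfK ?gt_eqF.
move: h1 h2 cE; set q := (c / L)%R; set zz := (z%:~R : R) => h1 h2 cE.
rewrite cE.
have p1 : (0 <= (q - zz) * L)%R by rewrite mulr_ge0 ?subr_ge0 // ltW.
have p2 : (0 <= (zz + 1 - q) * L)%R by rewrite mulr_ge0 ?subr_ge0 // ?ltW.
rewrite mulrBl mulrDl mul1r in p2; rewrite mulrBl in p1.
apply/andP; split; lra.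
Qed.

End periodic_integral.

Section cell_integral.
Context (R : realType).
Local Open Scope ereal_scope.
Local Notation mu := (@lebesgue_measure R).
Variables (L L' : R).

Lemma mcell : measurable (cell L L').
Proof. by apply: measurableX. Qed.

Lemma cell_tonelli2 (F : R * R -> \bar R) : measurable_fun setT F -> (forall z, 0 <= F z) ->
  \int[@leb2 R]_(z in cell L L') F z =
  \int[mu]_(y in `[0%R, L'[) \int[mu]_(x in `[0%R, L[) F (x, y).
Proof.
move=> mF F0.
rewrite integral_mkcond /leb2 fubini_tonelli2 //; last 2 first.
- by apply/(measurable_restrictT F mcell); exact: measurable_funS mF.
- by move=> z; rewrite /patch; case: ifPn.
rewrite [RHS]integral_mkcond; apply: eq_integral => y _.
rewrite /fubini_G /patch; case: ifPn => yB.
  rewrite [RHS]integral_mkcond; apply: eq_integral => x _.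
  by rewrite /patch in_setX /= yB andbT.
transitivity (\int[mu]_(x in setT) (cst 0%R x)); last exact: integral0.
apply: eq_integral => x _.
by rewrite in_setX /= (negbTE yB) andbF.
Qed.

Lemma cell_tonelli1 (F : R * R -> \bar R) : measurable_fun setT F -> (forall z, 0 <= F z) ->
  \int[@leb2 R]_(z in cell L L') F z =
  \int[mu]_(x in `[0%R, L[) \int[mu]_(y in `[0%R, L'[) F (x, y).
Proof.
move=> mF F0.
rewrite integral_mkcond /leb2 fubini_tonelli1 //; last 2 first.
- by apply/(measurable_restrictT F mcell); exact: measurable_funS mF.
- by move=> z; rewrite /patch; case: ifPn.
rewrite [RHS]integral_mkcond; apply: eq_integral => x _.
rewrite /fubini_F /patch; case: ifPn => xA.
  rewrite [RHS]integral_mkcond; apply: eq_integral => y _.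
  by rewrite /patch in_setX /= xA.
transitivity (\int[mu]_(y in setT) (cst 0%R y)); last exact: integral0.
apply: eq_integral => y _.
by rewrite in_setX /= (negbTE xA).
Qed.

End cell_integral.

Section cell_shift.
Context (R : realType).
Local Open Scope ereal_scope.
Variables (L L' : R) (g : R * R -> \bar R).
Hypotheses (L0 : (0 < L)%R) (L'0 : (0 < L')%R) (mg : measurable_fun setT g)
  (g0 : forall z, 0 <= g z)
  (gL : forall x y, g ((x + L)%R, y) = g (x, y))
  (gL' : forall x y, g (x, (y + L')%R) = g (x, y)).

Lemma mshift_pair1 (c : R) : measurable_fun [set: R * R] (fun z : R * R => ((z.1 + c)%R, z.2)).
Proof.
have h1 : measurable_fun [set: R * R] (fun z : R * R => (z.1 + c)%R).
  by apply: measurable_funD; [exact: measurable_fst|exact: measurable_cst].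
exact: (measurable_fun_pair h1 measurable_snd).
Qed.

Lemma mshift_pair2 (c : R) : measurable_fun [set: R * R] (fun z : R * R => (z.1, (z.2 + c)%R)).
Proof.
have h1 : measurable_fun [set: R * R] (fun z : R * R => (z.2 + c)%R).
  by apply: measurable_funD; [exact: measurable_snd|exact: measurable_cst].
exact: (measurable_fun_pair measurable_fst h1).
Qed.

Lemma cell_shift1 (c : R) :
  \int[@leb2 R]_(z in cell L L') g ((z.1 + c)%R, z.2) = \int[@leb2 R]_(z in cell L L') g z.
Proof.
rewrite (@cell_tonelli2 _ _ _ (fun z => g ((z.1 + c)%R, z.2))) //; last first.
  exact: (measurableT_comp mg (mshift_pair1 c)).
rewrite cell_tonelli2 //; apply: eq_integral => y _ /=.
apply: (periodic_shift_integral (f := fun x => g (x, y))) => //.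
exact: measurable_fun_pair1.
Qed.

Lemma cell_shift2 (c : R) :
  \int[@leb2 R]_(z in cell L L') g (z.1, (z.2 + c)%R) = \int[@leb2 R]_(z in cell L L') g z.
Proof.
rewrite (@cell_tonelli1 _ _ _ (fun z => g (z.1, (z.2 + c)%R))) //; last first.
  exact: (measurableT_comp mg (mshift_pair2 c)).
rewrite cell_tonelli1 //; apply: eq_integral => x _ /=.
apply: (periodic_shift_integral (f := fun y => g (x, y))) => //.
exact: measurable_fun_pair2.
Qed.

End cell_shift.

Section periodic_measurable.
Context (R : realType).

Definition fr (P x : R) : R := x - (Num.floor (x / P))%:~R * P.

Lemma mfr (P : R) : 0 < P -> measurable_fun [set: R] (fr P).
Proof.
move=> P0; apply: measurable_funB; first exact: measurable_id.
apply: nondecreasing_measurable => // x y xy.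
rewrite ler_pM2r // ler_int; apply: le_floor.
by rewrite ler_pM2r // invr_gt0.
Qed.

Lemma fr_itv (P x : R) : 0 < P -> 0 <= fr P x < P.
Proof.
move=> P0; rewrite /fr.
have h1 : ((Num.floor (x / P))%:~R : R) <= x / P by exact: floor_le_tmp.
have h2 : x / P < (Num.floor (x / P))%:~R + 1 by have := floorD1_gt (x / P); rewrite intrD.
have cE : x = (x / P) * P by rewrite divfK ?gt_eqF.
move: h1 h2 cE; set q := x / P; set zz := ((Num.floor q)%:~R : R) => h1 h2 cE.
rewrite [X in X - _]cE.
have p1 : 0 <= (q - zz) * P by rewrite mulr_ge0 ?subr_ge0 // ltW.
have p2 : 0 <= (zz + 1 - q) * P by rewrite mulr_ge0 ?subr_ge0 // ?ltW.
rewrite mulrBl mulrDl mul1r in p2; rewrite mulrBl in p1.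
apply/andP; split; first exact: p1.
have h3 : q * P < (zz + 1) * P by rewrite ltr_pM2r.
rewrite mulrDl mul1r in h3; rewrite ltrBlDl; exact: h3.
Qed.

Lemma fr_periodic (T : Type) (P : R) (g : R -> T) :
  (forall x, g (x + P) = g x) -> forall x, g (fr P x) = g x.
Proof.
move=> gP x; rewrite /fr -mulNr -mulrNz.
exact: (periodic_int gP).
Qed.

Lemma periodic_measurable (L L' : R) (v : R * R -> R) : 0 < L -> 0 < L' ->
  measurable_fun (cell L L') v ->
  (forall x y, v (x + L, y) = v (x, y)) -> (forall x y, v (x, y + L') = v (x, y)) ->
  measurable_fun [set: R * R] v.
Proof.
move=> L0 L'0 mv vL vL'.
have -> : v = v \o (fun z : R * R => (fr L z.1, fr L' z.2)).
  apply/funext => -[x y] /=.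
  rewrite (fr_periodic (g := fun x => v (x, fr L' y))) //.
  by rewrite (fr_periodic (g := fun y => v (x, y))).
apply: (measurable_comp (F := cell L L')) => //.
- exact: mcell.
- move=> _ [z _ <-]; split => /=; rewrite in_itv /= ?fr_itv //.
- apply: measurable_fun_pair.
  + exact: (measurableT_comp (mfr L0) measurable_fst).
  + exact: (measurableT_comp (mfr L'0) measurable_snd).
Qed.

End periodic_measurable.

Section rk.
Context (R : realType).
Local Open Scope ereal_scope.

Lemma Gammaf_ge0 (a : R) : (0 <= Gammaf a)%R.
Proof.
rewrite /Gammaf /Rintegral; apply: fine_ge0; apply: integral_ge0 => x _.
by rewrite lee_fin mulr_ge0 ?powR_ge0 ?expR_ge0.
Qed.

Lemma besselK_ge0 (nu s : R) : (0 <= besselK nu s)%R.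
Proof.
rewrite /besselK /Rintegral; apply: mulr_ge0; first by rewrite invr_ge0.
apply: fine_ge0; apply: integral_ge0 => x _.
by rewrite lee_fin mulr_ge0 ?powR_ge0 ?expR_ge0.
Qed.

Lemma r_first_ge0 (H lam tau t : R) : (0 < H)%R -> (0 < lam)%R -> (0 < tau)%R ->
  (0 <= r_first H lam tau t)%R.
Proof.
move=> H0 l0 t0; rewrite /r_first.
apply: mulr_ge0; last exact: ltW.
apply: mulr_ge0; last exact: besselK_ge0.
apply: mulr_ge0; last exact: powR_ge0.
apply: mulr_ge0; last exact: ltW.
apply: divr_ge0; first exact: Gammaf_ge0.
apply: mulr_ge0; last exact: powR_ge0.
apply: mulr_ge0; last exact: sqrtr_ge0.
apply: mulr_ge0 => //; exact: ltW.
Qed.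

Lemma r_second_ge0 (H lam tau t : R) : (0 < H)%R -> (0 < lam)%R -> (0 < tau)%R ->
  (0 < t)%R -> (0 <= r_second H lam tau t)%R.
Proof.
move=> H0 l0 t0 tt0; rewrite /r_second.
apply: mulr_ge0; last exact: ltW.
apply: mulr_ge0; last exact: besselK_ge0.
apply: mulr_ge0; last exact: ltW.
apply: mulr_ge0; last exact: ltW.
apply: divr_ge0; first exact: Gammaf_ge0.
apply: mulr_ge0; last exact: powR_ge0.
apply: mulr_ge0; last exact: sqrtr_ge0.
exact: ltW.
Qed.

End rk.

Lemma pointwise_ineq (R : realType) (a b v p q s t w : R) : 0 <= a -> 0 <= b ->
  (1 + 2 * a + 2 * b) * v - a * (p + q) - b * (s + t) = w ->
  (1 + 2 * a + 2 * b) * v ^+ 2 <= w ^+ 2 + a * p ^+ 2 + a * q ^+ 2 + b * s ^+ 2 + b * t ^+ 2.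
Proof.
move=> a0 b0 wE; rewrite -subr_ge0.
have -> : w ^+ 2 + a * p ^+ 2 + a * q ^+ 2 + b * s ^+ 2 + b * t ^+ 2
   - (1 + 2 * a + 2 * b) * v ^+ 2
  = (w - v) ^+ 2 + a * ((v - p) ^+ 2 + (v - q) ^+ 2) + b * ((v - s) ^+ 2 + (v - t) ^+ 2).
  rewrite -wE; ring.
apply: addr_ge0; first apply: addr_ge0.
- exact: sqr_ge0.
- by apply: mulr_ge0 => //; apply: addr_ge0; exact: sqr_ge0.
- by apply: mulr_ge0 => //; apply: addr_ge0; exact: sqr_ge0.
Qed.

Section step.
Context (R : realType).
Local Open Scope ereal_scope.

Lemma step (L L' h l hh ll r : R) (v w : R * R -> R) :
  (0 < L)%R -> (0 < L')%R -> (0 <= r)%R -> (0 < hh)%R -> (0 < ll)%R ->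
  measurable_fun setT v -> measurable_fun setT w ->
  (forall x y, v ((x + L)%R, y) = v (x, y)) -> (forall x y, v (x, (y + L')%R) = v (x, y)) ->
  L2norm2 L L' v < +oo -> L2norm2 L L' w < +oo ->
  (forall x y, ((1 + 2 * r / hh + 2 * r / ll) * v (x, y)
      - r / hh * (v (x + h, y) + v (x - h, y))
      - r / ll * (v (x, y + l) + v (x, y - l)) = w (x, y))%R) ->
  L2norm2 L L' v <= L2norm2 L L' w.
Proof.
move=> L0 L'0 r0 hh0 ll0 mv mw vL vL' vfin wfin E.
set a := (r / hh)%R; set b := (r / ll)%R.
have a0 : (0 <= a)%R by rewrite divr_ge0 // ltW.
have b0 : (0 <= b)%R by rewrite divr_ge0 // ltW.
pose G := fun z : R * R => ((v z) ^+ 2)%:E.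
have mG : measurable_fun setT G by apply/measurable_EFinP; exact: measurable_funX.
have G0 : forall z, 0 <= G z by move=> z; rewrite lee_fin sqr_ge0.
have GL : forall x y, G ((x + L)%R, y) = G (x, y) by move=> x y; rewrite /G vL.
have GL' : forall x y, G (x, (y + L')%R) = G (x, y) by move=> x y; rewrite /G vL'.
pose W := fun z : R * R => ((w z) ^+ 2)%:E.
have mW : measurable_fun setT W by apply/measurable_EFinP; exact: measurable_funX.
have W0 : forall z, 0 <= W z by move=> z; rewrite lee_fin sqr_ge0.
have mS1 c : measurable_fun setT (fun z : R * R => G ((z.1 + c)%R, z.2)).
  exact: (measurableT_comp mG (mshift_pair1 c)).
have mS2 c : measurable_fun setT (fun z : R * R => G (z.1, (z.2 + c)%R)).
  exact: (measurableT_comp mG (mshift_pair2 c)).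
have mC := @mcell R L L'.
have e1 c : \int[@leb2 R]_(z in cell L L') G ((z.1 + c)%R, z.2) = L2norm2 L L' v.
  exact: cell_shift1.
have e2 c : \int[@leb2 R]_(z in cell L L') G (z.1, (z.2 + c)%R) = L2norm2 L L' v.
  exact: cell_shift2.
have c0 : (0 <= 1 + 2 * a + 2 * b)%R.
  by apply: addr_ge0; [apply: addr_ge0|apply: mulr_ge0] => //; apply: mulr_ge0.
have key : (1 + 2 * a + 2 * b)%:E * L2norm2 L L' v <=
   L2norm2 L L' w + a%:E * L2norm2 L L' v + a%:E * L2norm2 L L' v
   + b%:E * L2norm2 L L' v + b%:E * L2norm2 L L' v.
  rewrite -{2}(e1 h) -{2}(e1 (- h)%R) -{2}(e2 l) -{2}(e2 (- l)%R).
  rewrite /L2norm2 -!ge0_integralZl_EFin //; first last.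
  all: try (by move=> z _; exact: G0).
  all: try (exact: (measurable_funS measurableT (@subsetT _ _) (mS1 _))).
  all: try (exact: (measurable_funS measurableT (@subsetT _ _) (mS2 _))).
  all: try (exact: (measurable_funS measurableT (@subsetT _ _) mG)).
  all: try (by apply: addr_ge0; [apply: addr_ge0|apply: mulr_ge0] => //; apply: mulr_ge0).
  rewrite /leb2 -!ge0_integralD //; first last.
  all: try (by move=> z _; rewrite ?adde_ge0 ?mule_ge0 ?lee_fin ?sqr_ge0 ?G0 ?W0 ?c0 ?a0 ?b0).
  all: try (apply: (measurable_funS measurableT (@subsetT _ _));
    by repeat first [ apply: emeasurable_funD | apply: measurable_funeM
                    | exact: mS1 | exact: mS2 | exact: mW | exact: mG ]).
  apply: ge0_le_integral => //.
  all: try (by move=> z _; rewrite ?adde_ge0 ?mule_ge0 ?lee_fin ?sqr_ge0 ?G0 ?W0 ?c0 ?a0 ?b0).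
  all: try (apply: (measurable_funS measurableT (@subsetT _ _));
    by repeat first [ apply: emeasurable_funD | apply: measurable_funeM
                    | exact: mS1 | exact: mS2 | exact: mW | exact: mG ]).
  move=> [x y] _ /=; rewrite /G /W -!EFinM -!EFinD lee_fin.
  apply: pointwise_ineq => //.
  have e2a : (2 * r / hh = 2 * a)%R by rewrite /a mulrA.
  have e2b : (2 * r / ll = 2 * b)%R by rewrite /b mulrA.
  by have := E x y; rewrite e2a e2b.
have X0 : 0 <= L2norm2 L L' v by apply: integral_ge0 => z _; rewrite lee_fin sqr_ge0.
have W0' : 0 <= L2norm2 L L' w by apply: integral_ge0 => z _; rewrite lee_fin sqr_ge0.
have Xf : L2norm2 L L' v \is a fin_num by rewrite ge0_fin_numE.
have Wf : L2norm2 L L' w \is a fin_num by rewrite ge0_fin_numE.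
move: key; rewrite -(fineK Xf) -(fineK Wf) -!EFinM -!EFinD !lee_fin.
set x := fine _; set y := fine _ => key.
have f1 : ((1 + 2 * a + 2 * b) * x = x + (a * x + a * x + b * x + b * x))%R by ring.
have f2 : (y + a * x + a * x + b * x + b * x = y + (a * x + a * x + b * x + b * x))%R by ring.
by move: key; rewrite f1 f2 lerD2r.
Qed.

End step.

Unset Implicit Arguments.

Theorem mainTheorem2 (R : realType) (H lam tau h l L L' : R)
  (t : nat -> R) (r : nat -> R) (k1 : nat) (u : nat -> R * R -> R) :
  0 < H -> H < 1 -> H != 2^-1 ->
  0 < lam -> 0 < tau -> 0 < h -> 0 < l -> 0 < L -> 0 < L' ->
  (forall k, (0 < k)%N -> 0 < t k) ->
  (H < 2^-1 -> forall k, r k = r_first H lam tau (t k.+1)) ->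
  (2^-1 < H -> forall k, ((k <= k1)%N -> r k = r_first H lam tau (t k.+1)) /\
                         ((k1 < k)%N -> r k = r_second H lam tau (t k.+1))) ->
  (forall k x y, u k (x + L, y) = u k (x, y)) ->
  (forall k x y, u k (x, y + L') = u k (x, y)) ->
  (forall k, measurable_fun (cell L L') (u k)) ->
  (forall k, (L2norm2 L L' (u k) < +oo)%E) ->
  (forall k x y,
      (1 + 2 * r k / h ^+ 2 + 2 * r k / l ^+ 2) * u k.+1 (x, y)
      - r k / h ^+ 2 * (u k.+1 (x + h, y) + u k.+1 (x - h, y))
      - r k / l ^+ 2 * (u k.+1 (x, y + l) + u k.+1 (x, y - l))
      = u k (x, y)) ->
  forall k, (L2norm2 L L' (u k) <= L2norm2 L L' (u 0%N))%E.
Proof.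
move=> H0 H1 Hhalf lam0 tau0 h0 l0 L0 L'0 t0 rH1 rH2 uL uL' mu fin E.
have r0 : forall n, 0 <= r n.
  move=> n; case: (ltgtP H 2^-1) => [Hl|Hg|He].
  - rewrite rH1 //; exact: r_first_ge0.
  - have [A B] := rH2 Hg n; case: (leqP n k1) => nk.
    + rewrite A //; exact: r_first_ge0.
    + rewrite B //; apply: r_second_ge0 => //; exact: t0.
  - by move: Hhalf; rewrite He eqxx.
have mU : forall n, measurable_fun setT (u n).
  move=> n; apply: (periodic_measurable L0 L'0 (mu n)).
  - exact: uL.
  - exact: uL'.
have st : forall n, (L2norm2 L L' (u n.+1) <= L2norm2 L L' (u n))%E.
  move=> n; apply: (@step R L L' h l (h ^+ 2) (l ^+ 2) (r n)) => //.
  - exact: exprn_gt0.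
  - exact: exprn_gt0.
elim=> [|k IH]; first exact: lexx.
exact: le_trans (st k) IH.
Qed.
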